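(* Let $k$ be a positive integer and let $G$ be a $2k$-connected $(P_2\cup kP_1)$-free graph. Let $u,v$ be distinct vertices of $G$, let $P$ be a longest $(u,v)$-path in $G$, oriented from $u$ to $v$, and suppose $V(P)\neq V(G)$. Let $x\in V(G)\setminus V(P)$ and write $N_P(x)=\{x_1,\dots,x_t\}$, where $x_1,\dots,x_t$ appear on $P$ in this order from $u$ to $v$. Fix $i\in\{1,\dots,t-1\}$, let $S_i$ be the set of vertices of $P$ strictly between $x_i$ and $x_{i+1}$, and let $X\subseteq N_P(x)^+$ be any set with $x_i^+\in X$ and $|X|=2k-1$. Then for every integer $j$ with $1\le j\le |S_i|$: if $j$ is odd then $N_P(x_i^{+j})\cap X=\emptyset$, and if $j$ is even then $|N_P(x_i^{+j})\cap X|\ge k+1$.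
   Context: All graphs are finite and simple. For a graph $H$, a graph $G$ is $H$-free if $G$ contains no induced subgraph isomorphic to $H$; $P_2\cup kP_1$ is the disjoint union of an edge and $k$ isolated vertices. A $(u,v)$-path is a path with endpoints $u$ and $v$. $N_P(y)$ is the set of neighbors of $y$ lying on $P$. For a vertex $w$ of the oriented path $P$, $w^{+}$ (also $w^{+1}$) is its successor and $w^{-}$ (also $w^{-1}$) its predecessor on $P$, and $w^{+\ell}$, $w^{-\ell}$ denote the successor of $w^{+(\ell-1)}$, resp. predecessor of $w^{-(\ell-1)}$. For $S\subseteq V(P)$, $S^+=\{w^+: w\in S\setminus\{v\}\}$. (Under the hypotheses, $|N_P(x)^+|\ge 2k-1$, so such $X$ exists.) *)

(* Defs.v *)
From mathcomp Require Import all_boot.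
Set Implicit Arguments. Unset Strict Implicit. Unset Printing Implicit Defensive.

(* A finite simple graph: vertex set a finType T, adjacency e : rel T that is
   symmetric and irreflexive (assumed as hypotheses in the theorem). *)

Section Graphs.
Variable T : finType.
Variable e : rel T.

Definition avoid_rel (S : {set T}) : rel T :=
  [rel a b | [&& e a b, a \notin S & b \notin S]].

Definition n_connected (n : nat) : Prop :=
  n < #|T| /\
  forall S : {set T}, #|S| < n ->
    forall a b, a \notin S -> b \notin S -> connect (avoid_rel S) a b.

Definition has_induced_P2_kP1 (k : nat) : Prop :=
  exists a b (I : {set T}),
    [/\ e a b, #|I| = k, a \notin I, b \notin I &
     [/\ forall y z, y \in I -> z \in I -> ~~ e y z,
         forall y, y \in I -> ~~ e a y & forall y, y \in I -> ~~ e b y]].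

Definition P2_kP1_free (k : nat) : Prop := ~ has_induced_P2_kP1 k.

Definition uv_path (u v : T) (P : seq T) : bool :=
  if P is w :: p then [&& w == u, last w p == v, uniq P & path e w p]
  else false.

Definition longest_uv_path (u v : T) (P : seq T) : Prop :=
  uv_path u v P /\ forall Q, uv_path u v Q -> size Q <= size P.

Definition NP (P : seq T) (x : T) : seq T := [seq y <- P | e x y].

Definition succn_on (P : seq T) (w : T) (j : nat) : T :=
  nth w P (index w P + j).

(* S^+ = { w^+ : w in S \ {v} } for S ⊆ V(P), v the last vertex of P *)
Definition plus_set (P : seq T) (v : T) (S : seq T) : {set T} :=
  [set succn_on P w 1 | w in [seq w <- S | w != v]].

Definition between (P : seq T) (a b : T) : {set T} :=
  [set w in P | (index a P < index w P) && (index w P < index b P)].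

Definition NP_in (P : seq T) (y : T) (X : {set T}) : {set T} :=
  [set z in X | (z \in P) && e y z].

End Graphs.

(* Main.v *)
Require Import Defs.
From mathcomp Require Import all_boot zify.
Set Implicit Arguments. Unset Strict Implicit. Unset Printing Implicit Defensive.

Definition seg (T : finType) (P : seq T) i j := take (j - i) (drop i P).

Lemma size_seg (T : finType) (P : seq T) i j : j <= size P -> size (seg P i j) = j - i.
Proof. by move=> hj; rewrite /seg size_takel // size_drop leq_sub2r. Qed.

Lemma nth_seg (T : finType) (P : seq T) y i j k : k < j - i ->
  nth y (seg P i j) k = nth y P (i + k).
Proof. by move=> hk; rewrite /seg nth_take // nth_drop. Qed.

Lemma seg_cat (T : finType) (P : seq T) i j l : i <= j -> j <= l ->
  seg P i j ++ seg P j l = seg P i l.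
Proof.
move=> hij hjl; rewrite /seg.
have -> : l - i = (j - i) + (l - j) by lia.
by rewrite takeD drop_drop subnK.
Qed.

Lemma seg_full (T : finType) (P : seq T) : seg P 0 (size P) = P.
Proof. by rewrite /seg subn0 drop0 take_size. Qed.

Lemma seg_nil (T : finType) (P : seq T) i j : i < j -> j <= size P -> seg P i j != [::].
Proof. by move=> hij hj; rewrite -size_eq0 size_seg //; lia. Qed.

Lemma head_seg (T : finType) (P : seq T) y i j : i < j -> j <= size P ->
  head y (seg P i j) = nth y P i.
Proof. by move=> hij hj; rewrite -nth0 nth_seg ?addn0 //; lia. Qed.

Lemma last_seg (T : finType) (P : seq T) y i j : i < j -> j <= size P ->
  last y (seg P i j) = nth y P j.-1.
Proof.
move=> hij hj; rewrite -nth_last size_seg // nth_seg; last by lia.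
congr nth; lia.
Qed.

Lemma sorted_seg (T : finType) (e : rel T) (P : seq T) i j : sorted e P -> sorted e (seg P i j).
Proof. by move=> h; apply: take_sorted; apply: drop_sorted. Qed.

Lemma head_rev (T : finType) (y : T) s : head y (rev s) = last y s.
Proof. by case/lastP: s => // s a; rewrite rev_rcons last_rcons. Qed.

Lemma last_rev (T : finType) (y : T) s : last y (rev s) = head y s.
Proof. by case: s => // a s; rewrite rev_cons last_rcons. Qed.

Lemma sorted_rev (T : finType) (e : rel T) (e_sym : symmetric e) s : sorted e (rev s) = sorted e s.
Proof. by rewrite rev_sorted; apply: eq_sorted => a b /=; exact: e_sym. Qed.

Lemma sorted_catE (T : finType) (e : rel T) y s1 s2 : s1 != [::] -> s2 != [::] ->
  sorted e (s1 ++ s2) = [&& sorted e s1, e (last y s1) (head y s2) & sorted e s2].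
Proof. by case: s1 => // a s1; case: s2 => // b s2 _ _; rewrite /= cat_path. Qed.

Lemma uv_uniq (T : finType) (e : rel T) u v P : uv_path e u v P -> uniq P.
Proof. by case: P => // a p /and4P[]. Qed.

Lemma uv_head (T : finType) (e : rel T) u v P y : uv_path e u v P -> nth y P 0 = u.
Proof. by case: P => // a p /and4P[/eqP]. Qed.

Lemma uv_last (T : finType) (e : rel T) u v P y : uv_path e u v P -> nth y P (size P).-1 = v.
Proof. by case: P => // a p /and4P[_ /eqP <- _ _]; rewrite nth_last. Qed.

Lemma uv_sorted (T : finType) (e : rel T) u v P : uv_path e u v P -> sorted e P.
Proof. by case: P => // a p /and4P[]. Qed.

Lemma uv_size (T : finType) (e : rel T) u v P : uv_path e u v P -> 0 < size P.
Proof. by case: P. Qed.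

Lemma no_longer (T : finType) (e : rel T) u v P x y0 (HP : longest_uv_path e u v P)
  (hx : x \notin P) Q :
  Q != [::] -> head y0 Q = u -> last y0 Q = v -> sorted e Q ->
  perm_eq Q (x :: P) -> False.
Proof.
case: Q => [//|a Q] _ /= ha hl hs hperm.
have hu : uniq (a :: Q) by rewrite (perm_uniq hperm) /= hx (uv_uniq HP.1).
have : uv_path e u v (a :: Q).
  by apply/and4P; split; [exact/eqP | exact/eqP | exact: hu | exact: hs].
move/(HP.2); rewrite (perm_size hperm) /=; lia.
Qed.

Lemma head_catl (T : finType) (y : T) s1 s2 : s1 != [::] -> head y (s1 ++ s2) = head y s1.
Proof. by case: s1. Qed.

Lemma last_catr (T : finType) (y : T) s1 s2 : s2 != [::] -> last y (s1 ++ s2) = last y s2.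
Proof. by case: s2 => // a s2 _; rewrite last_cat. Qed.

Lemma sorted_consE (T : finType) (e : rel T) y x s : s != [::] ->
  sorted e (x :: s) = e x (head y s) && sorted e s.
Proof. by case: s. Qed.

Lemma rev_nil (T : finType) (s : seq T) : s != [::] -> rev s != [::].
Proof. by rewrite -!size_eq0 size_rev. Qed.

Lemma cons_nil (T : finType) (x : T) s : x :: s != [::].
Proof. by []. Qed.

Lemma cat_nil (T : finType) (s1 s2 : seq T) : s2 != [::] -> s1 ++ s2 != [::].
Proof. by rewrite -!size_eq0 size_cat; case: (size s2) => //= k _; rewrite addnS. Qed.

Ltac segnil := repeat first [ apply: cat_nil | apply: rev_nil | apply: cons_nil
  | (apply: seg_nil; lia) ].

Lemma ins_contra (T : finType) (e : rel T) (e_sym : symmetric e) u v P x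
  (HP : longest_uv_path e u v P) (hx : x \notin P) m :
  0 < m < size P -> e x (nth u P m.-1) -> e x (nth u P m) -> False.
Proof.
move=> hm h1 h2.
have hs := uv_sorted HP.1.
apply: (@no_longer _ e u v P x u HP hx (seg P 0 m ++ x :: seg P m (size P))).
- segnil.
- rewrite head_catl; last by segnil.
  rewrite head_seg; try lia; exact: uv_head HP.1.
- rewrite last_catr; last by segnil.
  rewrite /= last_seg; try lia; exact: uv_last HP.1.
- rewrite (@sorted_catE _ e u); try segnil.
  rewrite (@sorted_consE _ e u); try segnil.
  rewrite !sorted_seg // last_seg //; try lia.
  rewrite head_seg //; try lia.
  by rewrite e_sym h1 h2.
- rewrite -[in X in perm_eq _ X](seg_full P) -(@seg_cat _ P 0 m (size P)) //; last lia.
  apply/permP => f; rewrite /= !count_cat /=; lia.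
Qed.

Lemma head_cons' (T : finType) (y x : T) s : head y (x :: s) = x.
Proof. by []. Qed.

Ltac sseg y e_sym hs :=
  repeat (first [ rewrite head_cons' | rewrite last_cons | rewrite (sorted_rev e_sym) | rewrite head_rev | rewrite last_rev
    | (rewrite head_catl; [|segnil]) | (rewrite last_catr; [|segnil])
    | (rewrite head_seg; [|lia|lia]) | (rewrite last_seg; [|lia|lia])
    | rewrite (sorted_seg _ _ hs)
    | (rewrite (@sorted_catE _ _ y (seg _ _ _)); [|segnil|segnil])
    | (rewrite (@sorted_catE _ _ y (rev _)); [|segnil|segnil])
    | (rewrite (@sorted_consE _ _ y _ (_ ++ _)); [|segnil])
    | (rewrite (@sorted_consE _ _ y _ (rev _)); [|segnil])
    | (rewrite (@sorted_consE _ _ y _ (seg _ _ _)); [|segnil]) ]).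

Ltac closeE e_sym := simpl; repeat (apply/andP; split); try done; try (by rewrite e_sym).

Lemma indep_contra (T : finType) (e : rel T) (e_sym : symmetric e) u v P x
  (HP : longest_uv_path e u v P) (hx : x \notin P) m1 m2 :
  0 < m1 -> m1 < m2 -> m2 < size P ->
  e x (nth u P m1.-1) -> e x (nth u P m2.-1) -> e (nth u P m1) (nth u P m2) -> False.
Proof.
move=> h0 h12 h2n h1 h2 h3.
have hs := uv_sorted HP.1.
apply: (@no_longer _ e u v P x u HP hx
  (seg P 0 m1 ++ x :: rev (seg P m1 m2) ++ seg P m2 (size P))).
- segnil.
- sseg u e_sym hs; exact: uv_head HP.1.
- sseg u e_sym hs; exact: uv_last HP.1.
- sseg u e_sym hs; closeE e_sym.
- rewrite -[in X in perm_eq _ X](seg_full P) -(@seg_cat _ P 0 m1 (size P)) //; last lia.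
  rewrite -(@seg_cat _ P m1 m2 (size P)); try lia.
  apply/permP => f; rewrite !count_cat /= !count_cat ?count_rev; lia.
Qed.

Ltac permtac := apply/permP => f; rewrite !count_cat /= !count_cat ?count_rev; lia.

Lemma caseA_contra (T : finType) (e : rel T) (e_sym : symmetric e) u v P x
  (HP : longest_uv_path e u v P) (hx : x \notin P) m1 m2 a :
  0 < m1 -> m1 < m2 -> m2 <= a -> a.+1 < size P ->
  e x (nth u P m1.-1) -> e x (nth u P m2.-1) -> e (nth u P m1) (nth u P a) ->
  e (nth u P m2) (nth u P a.+1) -> False.
Proof.
move=> h0 h12 h2a han h1 h2 h3 h4.
have hs := uv_sorted HP.1.
apply: (@no_longer _ e u v P x u HP hx
  (seg P 0 m1 ++ x :: rev (seg P m1 m2) ++ rev (seg P m2 a.+1) ++ seg P a.+1 (size P))).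
- segnil.
- sseg u e_sym hs; exact: uv_head HP.1.
- sseg u e_sym hs; exact: uv_last HP.1.
- sseg u e_sym hs; closeE e_sym.
- rewrite -[in X in perm_eq _ X](seg_full P) -(@seg_cat _ P 0 m1 (size P)) //; last lia.
  rewrite -(@seg_cat _ P m1 m2 (size P)); try lia.
  rewrite -(@seg_cat _ P m2 a.+1 (size P)); try lia.
  permtac.
Qed.

Lemma caseB_contra (T : finType) (e : rel T) (e_sym : symmetric e) u v P x
  (HP : longest_uv_path e u v P) (hx : x \notin P) m1 m2 a :
  a.+1 < m1 -> m1 < m2 -> m2 < size P ->
  e x (nth u P m1.-1) -> e x (nth u P m2.-1) -> e (nth u P a) (nth u P m1) ->
  e (nth u P m2) (nth u P a.+1) -> False.
Proof.
move=> h0 h12 h2n h1 h2 h3 h4.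
have hs := uv_sorted HP.1.
apply: (@no_longer _ e u v P x u HP hx
  (seg P 0 a.+1 ++ seg P m1 m2 ++ x :: rev (seg P a.+1 m1) ++ seg P m2 (size P))).
- segnil.
- sseg u e_sym hs; exact: uv_head HP.1.
- sseg u e_sym hs; exact: uv_last HP.1.
- sseg u e_sym hs; closeE e_sym.
- rewrite -[in X in perm_eq _ X](seg_full P) -(@seg_cat _ P 0 a.+1 (size P)) //; last lia.
  rewrite -(@seg_cat _ P a.+1 m1 (size P)); try lia.
  rewrite -(@seg_cat _ P m1 m2 (size P)); try lia.
  permtac.
Qed.

Lemma caseC_contra (T : finType) (e : rel T) (e_sym : symmetric e) u v P x
  (HP : longest_uv_path e u v P) (hx : x \notin P) m1 m2 a :
  0 < m1 -> m1 <= a -> a.+1 < m2 -> m2 < size P ->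
  e x (nth u P m1.-1) -> e x (nth u P m2.-1) -> e (nth u P a.+1) (nth u P m1) ->
  e (nth u P a) (nth u P m2) -> False.
Proof.
move=> h0 h1a ha2 h2n h1 h2 h3 h4.
have hs := uv_sorted HP.1.
apply: (@no_longer _ e u v P x u HP hx
  (seg P 0 m1 ++ x :: rev (seg P a.+1 m2) ++ seg P m1 a.+1 ++ seg P m2 (size P))).
- segnil.
- sseg u e_sym hs; exact: uv_head HP.1.
- sseg u e_sym hs; exact: uv_last HP.1.
- sseg u e_sym hs; closeE e_sym.
- rewrite -[in X in perm_eq _ X](seg_full P) -(@seg_cat _ P 0 m1 (size P)) //; last lia.
  rewrite -(@seg_cat _ P m1 a.+1 (size P)); try lia.
  rewrite -(@seg_cat _ P a.+1 m2 (size P)); try lia.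
  permtac.
Qed.


Lemma nth_filter_pos (T : finType) (f : pred T) (s : seq T) y c :
  c < size (filter f s) ->
  exists m, [/\ m < size s, f (nth y s m), nth y (filter f s) c = nth y s m
             & count f (take m s) = c].
Proof.
elim: s c => [//|h s IH] c /=.
case fh: (f h) => /=.
- case: c => [|c] hc.
  + by exists 0; rewrite fh take0.
  + have [m [h1 h2 h3 h4]] := IH c hc.
    by exists m.+1; rewrite /= fh h3 h4; split.
- move=> hc; have [m [h1 h2 h3 h4]] := IH c hc.
  by exists m.+1; rewrite /= fh h3 h4; split.
Qed.

Lemma count_take_mono (T : finType) (f : pred T) (s : seq T) m1 m2 : m1 <= m2 ->
  count f (take m1 s) <= count f (take m2 s).
Proof.
move=> h; rewrite -(subnK h) addnC takeD count_cat; exact: leq_addr.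
Qed.

Lemma count_take_S (T : finType) (f : pred T) (s : seq T) y m : m < size s ->
  count f (take m.+1 s) = count f (take m s) + f (nth y s m).
Proof. by move=> h; rewrite (take_nth y h) -cats1 count_cat /= addn0. Qed.

Lemma pick_sub (T : finType) (J : {set T}) k : k <= #|J| ->
  exists I : {set T}, I \subset J /\ #|I| = k.
Proof.
move=> hk; exists [set z in take k (enum J)]; split.
- by apply/subsetP => z; rewrite inE => /mem_take; rewrite mem_enum.
- rewrite cardsE (card_uniqP _); first by rewrite size_takel // -cardE.
  by apply: take_uniq; exact: enum_uniq.
Qed.

Lemma free_bound (T : finType) (e : rel T) (e_sym : symmetric e) k
  (Hfree : P2_kP1_free e k) (Y : {set T}) a b :
  (forall y z, y \in Y -> z \in Y -> ~~ e y z) -> e a b -> b \notin Y ->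
  (forall y, y \in Y -> y != a -> ~~ e a y) ->
  #|Y| < #|Y :&: [set z | e b z]| + k.
Proof.
move=> Yind hab hbY haY.
rewrite -(cardsID [set z | e b z] Y).
rewrite ltn_add2l ltnNge; apply/negP => hk.
have [I [hIJ hI]] := pick_sub hk.
apply: Hfree; exists a, b, I; split => //.
- apply/negP => /(subsetP hIJ); rewrite !inE e_sym hab //.
- by apply/negP => /(subsetP hIJ); rewrite !inE (negPf hbY) andbF.
- split.
  + move=> y z /(subsetP hIJ) /setDP[hy _] /(subsetP hIJ) /setDP[hz _]; exact: Yind.
  + move=> y /(subsetP hIJ) /setDP[hy hyb]; apply: haY => //.
    apply/eqP => hya; move: hyb; rewrite hya inE e_sym hab //.
  + by move=> y /(subsetP hIJ) /setDP[_]; rewrite inE.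
Qed.


Lemma odd_contra (T : finType) (e : rel T) (e_sym : symmetric e) u v P x
  (HP : longest_uv_path e u v P) (hx : x \notin P) s t a m1 m2 :
  s < a -> a.+1 < t -> t < size P ->
  (forall m, s < m < t -> ~~ e x (nth u P m)) ->
  0 < m1 -> m1 < m2 -> m2 < size P ->
  e x (nth u P m1.-1) -> e x (nth u P m2.-1) ->
  e (nth u P a) (nth u P m1) -> e (nth u P a) (nth u P m2) ->
  e (nth u P a.+1) (nth u P m1) -> e (nth u P a.+1) (nth u P m2) -> False.
Proof.
move=> hsa hat htn hbet h0 h12 h2n h1 h2 e1 e2 e3 e4.
have hp : ~~ (s < m1.-1 < t) by apply/negP => /hbet; rewrite h1.
have hq : ~~ (s < m2.-1 < t) by apply/negP => /hbet; rewrite h2.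
case: (leqP m2.-1 s) => hq2.
  apply: (caseA_contra e_sym HP hx (a:=a) h0 h12 _ _ h1 h2); [lia | lia | by rewrite e_sym | by rewrite e_sym].
case: (leqP m1.-1 s) => hp1.
  by apply: (caseC_contra e_sym HP hx (a:=a) h0 _ _ _ h1 h2); [lia | lia | lia | |].
by apply: (caseB_contra e_sym HP hx (a:=a) _ h12 h2n h1 h2); [lia | | rewrite e_sym].
Qed.


Theorem mainTheorem5 (T : finType) (e : rel T)
  (e_sym : symmetric e) (e_irr : irreflexive e)
  (k : nat) (k_pos : 0 < k)
  (Hconn : n_connected e (2 * k))
  (Hfree : P2_kP1_free e k)
  (u v : T) (huv : u != v)
  (P : seq T) (HP : longest_uv_path e u v P)
  (HPspan : exists y : T, y \notin P)
  (x : T) (hx : x \notin P)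
  (i : nat) (hi1 : 1 <= i) (hi2 : i <= (size (NP e P x)).-1)
  (X : {set T})
  (hXsub : X \subset plus_set P v (NP e P x))
  (hXi : succn_on P (nth x (NP e P x) i.-1) 1 \in X)
  (hXcard : #|X| = 2 * k - 1) :
  let xi := nth x (NP e P x) i.-1 in
  let xi1 := nth x (NP e P x) i in
  forall j : nat, 1 <= j <= #|between P xi xi1| ->
    (odd j -> NP_in e P (succn_on P xi j) X = set0) /\
    (~~ odd j -> k + 1 <= #|NP_in e P (succn_on P xi j) X|).
Proof.
cbv zeta; move=> j hj.
have hP := HP.1.
have uP := uv_uniq hP.
have hn0 : 0 < size P := uv_size hP.
have hi : i < size (NP e P x) by clear -hi1 hi2; lia.
have [s [hs1 hs2 hs3 hs4]] := @nth_filter_pos T (fun y => e x y) P x i.-1 (leq_ltn_trans (leq_pred _) hi).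
have [t [ht1 ht2 ht3 ht4]] := @nth_filter_pos T (fun y => e x y) P x i hi.
have hxi : nth x (NP e P x) i.-1 = nth u P s by rewrite /NP hs3 (set_nth_default u).
have hxi1 : nth x (NP e P x) i = nth u P t by rewrite /NP ht3 (set_nth_default u).
rewrite (set_nth_default u) // in hs2.
rewrite (set_nth_default u) // in ht2.
have hst : s < t.
  rewrite ltnNge; apply/negP => hts.
  have := count_take_mono (fun y => e x y) P hts; rewrite hs4 ht4 => h; clear -h hi1; lia.
have hbet : forall m, s < m < t -> ~~ e x (nth u P m).
  move=> m hm; apply/negP => hxm.
  have hm1 : m < size P by case/andP: hm => _ h; exact: ltn_trans h ht1.
  have hm2 : s.+1 <= m by case/andP: hm.
  have hm3 : m.+1 <= t by case/andP: hm.
  have h1 := @count_take_S T (fun y => e x y) P u m hm1.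
  have h2 := @count_take_S T (fun y => e x y) P u s hs1.
  have h3 := @count_take_mono T (fun y => e x y) P s.+1 m hm2.
  have h4 := @count_take_mono T (fun y => e x y) P m.+1 t hm3.
  rewrite hxm in h1; rewrite hs2 in h2; clear -h1 h2 h3 h4 hs4 ht4 hi1; lia.
have htn : t < size P := ht1.
have hidx_s : index (nth u P s) P = s by rewrite index_uniq.
have hidx_t : index (nth u P t) P = t by rewrite index_uniq.
have hbetc : #|between P (nth u P s) (nth u P t)| <= t - s.+1.
  rewrite cardE.
  have hsub : {subset map (index^~ P) (enum (between P (nth u P s) (nth u P t)))
               <= iota s.+1 (t - s.+1)}.
    move=> z /mapP [y]; rewrite mem_enum inE hidx_s hidx_t => /andP [hyP hy] ->.
    rewrite mem_iota; clear -hy; lia.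
  have := uniq_leq_size _ hsub; rewrite size_map size_iota; apply.
  rewrite map_inj_in_uniq ?enum_uniq //.
  move=> y1 y2; rewrite !mem_enum !inE => /andP[hy1 _] /andP[hy2 _] hidx.
  by rewrite -(nth_index u hy1) -(nth_index u hy2) hidx.
rewrite hxi hxi1 in hj *.
have hj0' := hj.
have hjt : s + j < t by clear -hj hbetc hst; lia.
have hsucc : forall m, s + m < size P -> succn_on P (nth u P s) m = nth u P (s + m).
  by move=> m hm; rewrite /succn_on hidx_s (set_nth_default u).
rewrite hxi hsucc in hXi; last by clear -hst htn; lia.
have hXc : #|X|.+1 = 2 * k by rewrite hXcard; clear -k_pos; lia.
clear hi2 hs3 ht3 hs4 ht4 hbetc hj hi hi1 hxi hxi1 hXcard HPspan Hconn huv.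
have hlast : nth u P (size P).-1 = v := uv_last u hP.
have hXpos : forall z, z \in X ->
    exists m, [/\ 0 < m, m < size P, z = nth u P m & e x (nth u P m.-1)].
  move=> z /(subsetP hXsub) /imsetP [w0 hw0 ->].
  move: hw0; rewrite mem_filter => /andP [hw0v]; rewrite /NP mem_filter => /andP [hxw0 hw0P].
  have hm0 : index w0 P < size P by rewrite index_mem.
  have hm1 : (index w0 P).+1 < size P.
    rewrite ltn_neqAle hm0 andbT; apply/negP => /eqP hm.
    move: hw0v; rewrite -(nth_index u hw0P).
    have -> : index w0 P = (size P).-1 by clear -hm; lia.
    by rewrite hlast eqxx.
  exists (index w0 P).+1; split => //.
  - by rewrite /succn_on addn1 (set_nth_default u).
  - by rewrite /= nth_index.
have hXP : forall z, z \in X -> z \in P.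
  by move=> z /hXpos [m [_ hm -> _]]; rewrite mem_nth.
have hXind : forall z1 z2, z1 \in X -> z2 \in X -> ~~ e z1 z2.
  move=> z1 z2 /hXpos [m1 [h01 hm1 -> hx1]] /hXpos [m2 [h02 hm2 -> hx2]].
  apply/negP => he.
  case: (ltngtP m1 m2) => h12.
  - exact: (indep_contra e_sym HP hx h01 h12 hm2 hx1 hx2 he).
  - by apply: (indep_contra e_sym HP hx h02 h12 hm1 hx2 hx1); rewrite e_sym.
  - by move: he; rewrite h12 e_irr.
have hXx : forall z, z \in X -> ~~ e x z.
  move=> z /hXpos [m [h0 hm -> hx1]]; apply/negP => he.
  have hmm : 0 < m < size P by rewrite h0 hm.
  exact: (ins_contra e_sym HP hx hmm hx1 he).
have hxX : x \notin X by apply/negP => /hXP; rewrite (negPf hx).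
pose Y := x |: X.
have hYcard : #|Y| = 2 * k by rewrite /Y cardsU1 hxX /= add1n hXc.
have hYind : forall y z, y \in Y -> z \in Y -> ~~ e y z.
  move=> y z /setU1P [->|hy] /setU1P [->|hz].
  - by rewrite e_irr.
  - exact: hXx.
  - by rewrite e_sym; exact: hXx.
  - exact: hXind.
have hYN : forall b, ~~ e b x -> Y :&: [set z | e b z] = NP_in e P b X.
  move=> b hb; apply/setP => z; rewrite !inE.
  case: (z =P x) => [->|hzx] /=; first by rewrite (negPf hb) (negPf hxX).
  by case hz: (z \in X) => //=; rewrite hXP.
have hnotY : forall m, s.+1 < m < t -> nth u P m \notin Y.
  move=> m hm.
  have hmP : m < size P by case/andP: hm => _ h; exact: ltn_trans h htn.
  rewrite /Y; apply/setU1P => [[hmx|hmX]].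
    by move: hx; rewrite -hmx mem_nth.
  have [m' [h0 hm' heq hxm]] := hXpos _ hmX.
  have hmm : m = m'.
    by apply/eqP; rewrite -(nth_uniq u hmP hm' uP) heq.
  by move: hxm; rewrite -hmm; apply/negP; apply: hbet; clear -hm; lia.
have hWx : forall m, s < m < t -> ~~ e (nth u P m) x.
  by move=> m hm; rewrite e_sym; apply: hbet.
have hNXsub : forall b, NP_in e P b X \subset X.
  by move=> b; apply/subsetP => z; rewrite inE => /andP[].
have hfree : forall a b, e a b -> b \notin Y -> ~~ e b x ->
    (forall y, y \in Y -> y != a -> ~~ e a y) -> k + 1 <= #|NP_in e P b X|.
  move=> a b hab hbY hbx haY.
  have := free_bound e_sym Hfree hYind hab hbY haY.
  rewrite hYcard hYN // => h; clear -h; lia.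
have claim : forall j, 0 < j -> s + j < t ->
    (odd j -> NP_in e P (nth u P (s + j)) X = set0) /\
    (~~ odd j -> k + 1 <= #|NP_in e P (nth u P (s + j)) X|).
  elim => [//|j' IH] _ hjt'.
  case: j' IH hjt' => [|j'] IH hjt'.
    split => // _; apply/setP => z; rewrite !inE.
    case hz: (z \in X) => //=.
    by rewrite (negPf (hXind _ _ hXi hz)) andbF.
  have hj1 : s + j'.+1 < t by clear -hjt'; lia.
  have [IHo IHe] := IH isT hj1.
  have hbY : nth u P (s + j'.+2) \notin Y by apply: hnotY; clear -hjt'; lia.
  have hbx : ~~ e (nth u P (s + j'.+2)) x by apply: hWx; clear -hjt'; lia.
  have hab : e (nth u P (s + j'.+1)) (nth u P (s + j'.+2)).
    have hh : (s + j'.+1).+1 < size P by clear -hjt' htn; lia.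
    have -> : s + j'.+2 = (s + j'.+1).+1 by rewrite addnS.
    exact: (elimT (sortedP u) (uv_sorted hP) (s + j'.+1) hh).
  case hodd: (odd j'.+2).
  - split => // _.
    have hA : k + 1 <= #|NP_in e P (nth u P (s + j'.+1)) X|.
      by apply: IHe; move: hodd => /= ->.
    case: (set_0Vmem (NP_in e P (nth u P (s + j'.+2)) X)) => [//|[z hz]].
    exfalso.
    move: (hz); rewrite inE => /andP [hzX /andP [_ hbz]].
    have hB : k + 1 <= #|NP_in e P (nth u P (s + j'.+2)) X|.
      apply: (hfree z _ _ hbY hbx); first by rewrite e_sym.
      move=> y hy hyz; rewrite /Y in hy; case/setU1P: hy => [->|hy].
        by rewrite e_sym; apply: hXx.
      exact: hXind.
    set A := NP_in e P (nth u P (s + j'.+1)) X in hA.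
    set B := NP_in e P (nth u P (s + j'.+2)) X in hB hz.
    have hAB : #|A :|: B| <= #|X|.
      by apply: subset_leq_card; rewrite subUset !hNXsub.
    have hC : 2 <= #|A :&: B|.
      have := cardsUI A B => h; clear -h hA hB hAB hXc; lia.
    have [z1 hz1] : exists z1, z1 \in A :&: B by apply/card_gt0P; apply: leq_trans hC.
    have [z2 hz2] : exists z2, z2 \in (A :&: B) :\ z1.
      by apply/card_gt0P; move: hC; rewrite (cardsD1 z1) hz1 /= add1n ltnS.
    move: hz2; rewrite !inE => /andP [hz21 /andP [hz2A hz2B]].
    move: hz1; rewrite !inE => /andP [hz1A hz1B].
    move: hz2A hz2B hz1A hz1B; rewrite ?inE.
    move=> /andP [hz2X /andP [_ e2a]] /andP [_ /andP [_ e2b]].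
    move=> /andP [hz1X /andP [_ e1a]] /andP [_ /andP [_ e1b]].
    have [m1 [h01 hm1 hz1e hx1]] := hXpos _ hz1X.
    have [m2 [h02 hm2 hz2e hx2]] := hXpos _ hz2X.
    have hbet' : forall m, s < m < t -> ~~ e x (nth u P m) := hbet.
    have e_ab : forall m, e (nth u P (s + j'.+2)) (nth u P m) =
                          e (nth u P (s + j'.+1).+1) (nth u P m) by move=> m; rewrite addnS.
    subst z1 z2; rewrite !e_ab in e1b e2b.
    have hsa : s < s + j'.+1 by clear; lia.
    have hat : (s + j'.+1).+1 < t by clear -hjt'; lia.
    case: (ltngtP m1 m2) => h12.
    + exact: (odd_contra e_sym HP hx (s:=s) (t:=t) hsa hat htn hbet'
                h01 h12 hm2 hx1 hx2 e1a e2a e1b e2b).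
    + exact: (odd_contra e_sym HP hx (s:=s) (t:=t) hsa hat htn hbet'
                h02 h12 hm1 hx2 hx1 e2a e1a e2b e1b).
    + by move: hz21; rewrite h12 eqxx.
  - split => // _.
    have hem : NP_in e P (nth u P (s + j'.+1)) X = set0 by apply: IHo; move: hodd => /=; case: (odd j').
    apply: (hfree _ _ hab hbY hbx) => y /setU1P [->|hy] _.
      by apply: hWx; clear -hj1; lia.
    apply/negP => hay.
    have : y \in NP_in e P (nth u P (s + j'.+1)) X by rewrite inE hy hXP.
    by rewrite hem inE.
have hj0 : 0 < j by case/andP: hj0'.
have [Co Ce] := claim j hj0 hjt.
by rewrite hsucc; [split | clear -hjt htn; lia].
Qed.
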